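(* Let $1\le D\le K-1$, let $\mathbf{L}$ be the $(K,D)$ AIR matrix, let $x_0,\dots,x_{K-1}\in\mathbb{F}_2$ and $c_k=\sum_{j=0}^{K-1}\mathbf{L}(j,k)x_j$ for $k\in[0:K-D-1]$. For each $k\in[0:K-1]$ consider receiver $R_k$, which wants $x_k$ and knows the side-information $\{x_{k+1},x_{k+2},\dots,x_{k+D}\}$ (subscripts modulo $K$). Then $R_k$ can decode $x_k$ as follows; in each case the displayed identity holds and every message symbol occurring in the $\nu$-terms belongs to $R_k$'s side-information. (i) If $k\in D_i$ for some $i\in[0:\lceil l/2\rceil]$: $x_k=c_k+c_{k+\mu_k}+\nu_k+\nu_{k+\mu_k}$, where $\nu_k=\sum_{z=1}^{i}\sum_{j=1}^{\beta_{2z-1}}x_{k+D-\lambda_{2z-2}+j\lambda_{2z-1}}$ and $\nu_{k+\mu_k}=x_{k+\mu_k}+\sum_{z=1}^{i}\sum_{j=1}^{\beta_{2z-1}}x_{k+\mu_k+D-\lambda_{2z-2}+j\lambda_{2z-1}}$. (ii) If $k\in E_i$ for some $i\in[0:\lceil l/2\rceil-1]$: $x_k=c_k+c_{k+\mu_k}+\sum_{\tau=1}^{p_k}c_{k+t_{k,\tau}}+\nu_k+\nu_{k+\mu_k}+\sum_{\tau=1}^{p_k}\nu_{k+t_{k,\tau}}$, where $\nu_k$ is as in (i), $\nu_{k+t_{k,\tau}}=x_{k+t_{k,\tau}}+\sum_{z=1}^{i}\sum_{j=1}^{\beta_{2z-1}}x_{k+t_{k,\tau}+D-\lambda_{2z-2}+j\lambda_{2z-1}}$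 for $\tau\in[1:p_k]$, and $\nu_{k+\mu_k}=x_{k+\mu_k}+\sum_{z=1}^{i}\sum_{j=1}^{\beta_{2z-1}}x_{k+\mu_k+D-\lambda_{2z-2}+j\lambda_{2z-1}}+\sum_{j=1}^{c}x_{k+\mu_k+D-\lambda_{2i}+j\lambda_{2i+1}}$, with $c\ge0$ the integer such that $k-(K-D-\lambda_{2i-1})=(\beta_{2i}-1)\lambda_{2i}+c\lambda_{2i+1}+d$, $0\le d<\lambda_{2i+1}$. (iii) If $k\in[K-D-\lambda_l:K-D-1]$: $x_k=c_k+\nu_k$, where $\nu_k=\sum_{z=1}^{\lceil l/2\rceil}\sum_{j=1}^{\beta_{2z-1}}x_{k+D-\lambda_{2z-2}+j\lambda_{2z-1}}$ if $l$ is odd, and $\nu_k=x_{k+D}+\sum_{z=1}^{\lceil l/2\rceil}\sum_{j=1}^{\beta_{2z-1}}x_{k+D-\lambda_{2z-2}+j\lambda_{2z-1}}$ if $l$ is even. (iv) If $k\in[K-D:K-1]$ and $k'=k\bmod(K-D)$: $x_k$ occurs in $c_{k'}$ and $x_k=c_{k'}+\nu_{k'}$, where $\nu_{k'}$ is the sum of all message symbols occurring in $c_{k'}$ other than $x_k$.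
   Context: Notation: $[a:b]=\{a,\dots,b\}$ (empty if $b<a$). Let $K,D$ be integers with $1\le D\le K-1$. Define $\lambda_{-1}=K-D$, $\lambda_0=D$ and recursively, by Euclidean division, $\lambda_{i-1}=\beta_i\lambda_i+\lambda_{i+1}$ with $0\le\lambda_{i+1}<\lambda_i$, for $i=0,1,2,\dots$, stopping at the index $l\ge0$ with $\lambda_{l+1}=0$; $\beta_0\ge0$ may be $0$, $\beta_i\ge1$ for $i\ge1$. Set $\lambda_j=0$, $\beta_j=0$ for $j>l$. For $n\mid m$, $\mathbf{I}_{m\times n}$ is $m/n$ copies of the $n\times n$ identity stacked vertically and $\mathbf{I}_{n\times m}$ its transpose. The $(K,D)$ AIR matrix $\mathbf{L}$ is the $K\times(K-D)$ $0/1$ matrix (rows $[0:K-1]$, columns $[0:K-D-1]$) that is zero except in the blocks: the $(K-D)\times(K-D)$ identity in rows and columns $[0:K-D-1]$; for $0\le 2i\le l$, the even submatrix $\mathbf{I}_{\lambda_{2i}\times\beta_{2i}\lambda_{2i}}$ in rows $[K-\lambda_{2i}:K-1]$, columns $[K-D-\lambda_{2i-1}:K-D-\lambda_{2i+1}-1]$ (absent if $i=0,\beta_0=0$); for $1\le 2i+1\le l$, the odd submatrix $\mathbf{I}_{\beta_{2i+1}\lambda_{2i+1}\times\lambda_{2i+1}}$ in rows $[K-\lambda_{2i}:K-\lambda_{2i+2}-1]$, columns $[K-D-\lambda_{2i+1}:K-D-1]$. For $0\le i\le\lceil l/2\rceil$ set $D_i=[K-D-\lambda_{2i-1}:K-D-\lambda_{2i-1}+(\beta_{2i}-1)\lambda_{2i}-1]$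 and $E_i=[K-D-\lambda_{2i-1}+(\beta_{2i}-1)\lambda_{2i}:K-D-\lambda_{2i+1}-1]$. Distances: for $k\in[0:K-D-1]$, $d_{down}(k)=k'-k$ where $k'$ is the largest row index $>k$ with $\mathbf{L}(k',k)=1$. For $k\in[0:K-D-\lambda_l-1]$: $\mu_k=k''-k$ where $k''$ is the smallest column index $>k$ with $\mathbf{L}(k+d_{down}(k),k'')=1$; $p_k$ is the number of entries equal to $1$ in column $k+\mu_k$ strictly below row $k+d_{down}(k)$, and $t_{k,1}<\dots<t_{k,p_k}$ are the row distances of these entries from row $k+d_{down}(k)$. All arithmetic is in $\mathbb{F}_2$. *)

(* Defs.v *)
(* F_2 is modelled by bool, with addition = addb (xor),
   written  a (+) b , and multiplication = andb. *)
From mathcomp Require Import all_boot.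
Set Implicit Arguments. Unset Strict Implicit. Unset Printing Implicit Defensive.

(* lam_pair K D j = (lambda_{j-1}, lambda_j); lambda_{-1} = K-D, lambda_0 = D,
   lambda_{i+1} = lambda_{i-1} mod lambda_i, and 0 once a 0 has been reached. *)
Fixpoint lam_pair (K D j : nat) : nat * nat :=
  match j with
  | 0 => (K - D, D)
  | j'.+1 => let: (a, b) := lam_pair K D j' in (b, if b == 0 then 0 else a %% b)
  end.

(* lam_prev K D n = lambda_{n-1}  (so lam_prev K D 0 = lambda_{-1} = K - D) *)
Definition lam_prev (K D n : nat) : nat := (lam_pair K D n).1.
Definition lam (K D n : nat) : nat := lam_prev K D n.+1.
(* beta K D i = beta_i = lambda_{i-1} div lambda_i  (= 0 when lambda_i = 0) *)
Definition beta (K D i : nat) : nat := lam_prev K D i %/ lam K D i.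
(* l = the (first) index with lambda_{l+1} = 0; it is < K since lambda is
   strictly decreasing from lambda_0 = D <= K - 1. *)
Definition ell (K D : nat) : nat := find (fun n => lam K D n.+1 == 0) (iota 0 K).

(* I_{n x m} (n | m, horizontal copies of identities): entry (a,b) = 1 iff b mod n = a.
   I_{m x n} (vertical copies): entry (a,b) = 1 iff a mod n = b. *)
Definition AIR (K D r c : nat) : bool :=
  let l := ell K D in
  [&& r < K, c < K - D &
   [|| (r < K - D) && (r == c),
       (* even submatrices I_{lambda_{2i} x beta_{2i} lambda_{2i}}, 0 <= 2i <= l,
          absent if i = 0 and beta_0 = 0 *)
       has (fun i =>
          [&& 2 * i <= l, ~~ ((i == 0) && (beta K D 0 == 0)),
              K - lam K D (2 * i) <= r,
              K - D - lam_prev K D (2 * i) <= c,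
              c < K - D - lam K D (2 * i).+1 &
              (c - (K - D - lam_prev K D (2 * i))) %% lam K D (2 * i)
                == r - (K - lam K D (2 * i))]) (iota 0 K)
     | (* odd submatrices I_{beta_{2i+1} lambda_{2i+1} x lambda_{2i+1}}, 1 <= 2i+1 <= l *)
       has (fun i =>
          [&& (2 * i).+1 <= l,
              K - lam K D (2 * i) <= r,
              r < K - lam K D (2 * i).+2,
              K - D - lam K D (2 * i).+1 <= c &
              (r - (K - lam K D (2 * i))) %% lam K D (2 * i).+1
                == c - (K - D - lam K D (2 * i).+1)]) (iota 0 K)]].

Definition cw (K D : nat) (x : nat -> bool) (k : nat) : bool :=
  \big[addb/false]_(j < K) (AIR K D j k && x j).

Definition sumx (K : nat) (x : nat -> bool) (s : seq nat) : bool :=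
  \big[addb/false]_(m <- s) x (m %% K).

Definition sideinfo (K D k m : nat) : bool :=
  has (fun t => (k + t) %% K == m %% K) (iota 1 D).

Definition ddown (K D k : nat) : nat :=
  last k [seq r <- iota k.+1 (K - k.+1) | AIR K D r k] - k.
Definition mu (K D k : nat) : nat :=
  head k [seq c <- iota k.+1 (K - D - k.+1) | AIR K D (k + ddown K D k) c] - k.
(* the increasing list [t_{k,1}; ...; t_{k,p_k}] of row distances from row
   k + d_down(k) of the 1-entries of column k + mu_k strictly below that row;
   p_k is its size. *)
Definition tlist (K D k : nat) : seq nat :=
  let r0 := k + ddown K D k in
  [seq r - r0 | r <- iota r0.+1 (K - r0.+1) & AIR K D r (k + mu K D k)].

Definition Dset (K D i k : nat) : bool :=
  (K - D - lam_prev K D (2 * i) <= k) &&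
  (k < K - D - lam_prev K D (2 * i) + (beta K D (2 * i) - 1) * lam K D (2 * i)).
Definition Eset (K D i k : nat) : bool :=
  (K - D - lam_prev K D (2 * i) + (beta K D (2 * i) - 1) * lam K D (2 * i) <= k) &&
  (k < K - D - lam K D (2 * i).+1).

(* the integer c >= 0 with k - (K-D-lambda_{2i-1}) = (beta_{2i}-1) lambda_{2i} + c lambda_{2i+1} + d,
   0 <= d < lambda_{2i+1} *)
Definition cE (K D i k : nat) : nat :=
  (k - (K - D - lam_prev K D (2 * i) + (beta K D (2 * i) - 1) * lam K D (2 * i)))
    %/ lam K D (2 * i).+1.

(* the index list of  sum_{z=1}^{i} sum_{j=1}^{beta_{2z-1}} x_{m + D - lambda_{2z-2} + j lambda_{2z-1}}
   (z = z'+1 with z' in [0:i-1]) *)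
Definition nu_base (K D m i : nat) : seq nat :=
  flatten [seq [seq m + (D - lam K D (2 * z)) + j * lam K D (2 * z).+1
               | j <- iota 1 (beta K D (2 * z).+1)] | z <- iota 0 i].

(* Main.v *)
Require Import Defs.
From mathcomp Require Import all_boot zify.
Set Implicit Arguments. Unset Strict Implicit. Unset Printing Implicit Defensive.

Lemma LSS K D j : lam_prev K D j.+2 =
  if lam_prev K D j.+1 == 0 then 0 else lam_prev K D j %% lam_prev K D j.+1.
Proof. by rewrite /lam_prev /=; case: (lam_pair K D j). Qed.

Lemma L0 K D : lam_prev K D 0 = K - D. Proof. by []. Qed.
Lemma L1 K D : lam_prev K D 1 = D. Proof. by []. Qed.

Lemma Lle_step K D j : lam_prev K D j.+2 <= lam_prev K D j.+1.
Proof.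
rewrite LSS; case: eqP => [//|/eqP h]; apply: ltnW; rewrite ltn_mod; lia.
Qed.

Lemma Llt_step K D j : 0 < lam_prev K D j.+1 -> lam_prev K D j.+2 < lam_prev K D j.+1.
Proof. move=> h; rewrite LSS; case: eqP => [|_]; [lia| by rewrite ltn_mod]. Qed.

Lemma Lmono K D j j' : 1 <= j <= j' -> lam_prev K D j' <= lam_prev K D j.
Proof.
move=> /andP[h1 h2]; elim: j' h2 => [|j' IH] h2; first lia.
case: (ltngtP j j'.+1) h2 => // [hlt|<-] _; last by [].
apply: leq_trans (IH _); last lia.
case: j' IH hlt => [|j'] IH hlt; first lia.
exact: Lle_step.
Qed.

Lemma LleD K D j : lam_prev K D j.+1 <= D.
Proof. by have := @Lmono K D 1 j.+1; rewrite L1; apply. Qed.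

Lemma Lle_n K D j : lam_prev K D j.+2 <= K - D.
Proof.
apply: leq_trans (@Lmono K D 2 j.+2 _) _; first by [].
rewrite LSS L1 L0; case: eqP => // _; exact: leq_mod.
Qed.

Lemma mul2S i : 2 * i.+1 = (2 * i).+2. Proof. lia. Qed.

Lemma L2le_n K D i : lam_prev K D (2*i) <= K - D.
Proof. case: i => [|i]; [by rewrite L0 | by rewrite mul2S Lle_n]. Qed.

Lemma Lzero K D j j' : lam_prev K D j.+1 = 0 -> j.+1 <= j' -> lam_prev K D j' = 0.
Proof.
move=> h0 hj. have := @Lmono K D j.+1 j'. rewrite h0. lia.
Qed.

Lemma Ldiv K D j : 0 < lam_prev K D j.+1 ->
  lam_prev K D j = beta K D j * lam_prev K D j.+1 + lam_prev K D j.+2.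
Proof.
move=> h; rewrite LSS; case: eqP => [|_]; first lia.
by rewrite /beta /lam -divn_eq.
Qed.

Lemma Lbound K D j : lam_prev K D j.+1 <= D - j.
Proof.
elim: j => [|j IH]; first by rewrite L1 subn0.
case: (posnP (lam_prev K D j.+1)) => h.
  by rewrite (@Lzero K D j j.+2 h).
have := Llt_step h; lia.
Qed.

Lemma ell_spec K D : 1 <= D -> D < K ->
  [/\ ell K D < K, lam_prev K D (ell K D).+2 = 0 &
      forall j, j <= ell K D -> 0 < lam_prev K D j.+1].
Proof.
move=> hD hK.
set P := (fun n => lam K D n.+1 == 0).
have hhas : has P (iota 0 K).
  apply/hasP; exists D.-1; first by rewrite mem_iota; lia.
  rewrite /P /lam. have := Lbound K D D. rewrite prednK //; lia.
have hl : ell K D < K by move: hhas; rewrite has_find size_iota.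
split => //.
- have := nth_find 0 hhas. rewrite /P /lam -/(ell K D) nth_iota //.
  by rewrite add0n => /eqP.
- move=> j hj. case: j hj => [|j] hj; first by rewrite L1.
  have := @before_find _ 0 P (iota 0 K) j. rewrite -/(ell K D) nth_iota; last lia.
  rewrite /P /lam add0n => h. have := h hj. lia.
Qed.

Lemma pos_le_ell K D j : 1 <= D -> D < K -> 0 < lam_prev K D j.+1 -> j <= ell K D.
Proof.
move=> hD hK h; case: (ell_spec hD hK) => _ h0 _.
case: (leqP j (ell K D)) => // hj.
have := @Lzero K D (ell K D).+1 j.+1 h0; lia.
Qed.

Lemma AIR_even_intro K D r c i : 1 <= D -> D < K -> 0 < lam_prev K D (2*i).+1 ->
  r < K -> K - lam_prev K D (2*i).+1 <= r ->
  K - D - lam_prev K D (2*i) <= c -> c < K - D - lam_prev K D (2*i).+2 ->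
  (c - (K - D - lam_prev K D (2*i))) %% lam_prev K D (2*i).+1 = r - (K - lam_prev K D (2*i).+1) ->
  AIR K D r c.
Proof.
move=> hD hK hp hr h1 h2 h3 h4.
have hl := pos_le_ell hD hK hp.
have [hlK _ _] := ell_spec hD hK.
rewrite /AIR hr /=; apply/andP; split; first lia.
apply/orP; right; apply/orP; left; apply/hasP; exists i; first by rewrite mem_iota; lia.
rewrite /lam h1 h2 h3 h4 eqxx hl /= !andbT.
apply/negP => /andP[/eqP ei /eqP b0]; subst i.
move: b0 h3; rewrite /beta /lam L1 L0 LSS L1 L0 /=.
have -> : (D == 0) = false by lia.
case: (ltnP (K - D) D) => hnD.
  by rewrite modn_small //; lia.
move=> b0; have : 0 < (K - D) %/ D by rewrite divn_gt0 //.
by rewrite b0.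
Qed.

Lemma AIR_odd_intro K D r c i : 1 <= D -> D < K -> 0 < lam_prev K D (2*i).+2 ->
  r < K -> c < K - D -> K - lam_prev K D (2*i).+1 <= r ->
  r < K - lam_prev K D (2*i).+3 ->
  K - D - lam_prev K D (2*i).+2 <= c ->
  (r - (K - lam_prev K D (2*i).+1)) %% lam_prev K D (2*i).+2 = c - (K - D - lam_prev K D (2*i).+2) ->
  AIR K D r c.
Proof.
move=> hD hK hp hr hc h1 h2 h3 h4.
have hl := pos_le_ell hD hK hp.
have [hlK _ _] := ell_spec hD hK.
rewrite /AIR hr hc /=.
apply/orP; right; apply/orP; right; apply/hasP; exists i; first by rewrite mem_iota; lia.
by rewrite /lam h1 h2 h3 h4 eqxx hl.
Qed.

Lemma AIR_top K D r c : r < K - D -> AIR K D r c = (c < K - D) && (r == c).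
Proof.
move=> hr; rewrite /AIR.
have -> : r < K by lia.
case: (c < K - D) => //=.
have hf : forall j, (K - lam_prev K D j.+1 <= r) = false.
  move=> j; have := LleD K D j; lia.
rewrite /lam.
have -> : has (fun i => [&& 2 * i <= ell K D, ~~ ((i == 0) && (beta K D 0 == 0)),
     K - lam_prev K D (2 * i).+1 <= r, K - D - lam_prev K D (2 * i) <= c,
     c < K - D - lam_prev K D (2 * i).+2
     & (c - (K - D - lam_prev K D (2 * i))) %% lam_prev K D (2 * i).+1 ==
       r - (K - lam_prev K D (2 * i).+1)]) (iota 0 K) = false.
  by apply/hasPn => i _; rewrite hf !andbF.
have -> : has (fun i => [&& (2 * i).+1 <= ell K D, K - lam_prev K D (2 * i).+1 <= r,
      r < K - lam_prev K D (2 * i).+3, K - D - lam_prev K D (2 * i).+2 <= c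
    & (r - (K - lam_prev K D (2 * i).+1)) %% lam_prev K D (2 * i).+2 ==
      c - (K - D - lam_prev K D (2 * i).+2)]) (iota 0 K) = false.
  by apply/hasPn => i _; rewrite hf !andbF.
by rewrite hr !orbF.
Qed.

Lemma AIR_elim K D r c : AIR K D r c ->
  [/\ r < K, c < K - D &
   [\/ r < K - D /\ r = c,
       exists i, [/\ K - lam_prev K D (2*i).+1 <= r, K - D - lam_prev K D (2*i) <= c,
              c < K - D - lam_prev K D (2*i).+2 &
              (c - (K - D - lam_prev K D (2*i))) %% lam_prev K D (2*i).+1 = r - (K - lam_prev K D (2*i).+1)]
     | exists i, [/\ K - lam_prev K D (2*i).+1 <= r, r < K - lam_prev K D (2*i).+3,
              K - D - lam_prev K D (2*i).+2 <= c &
              (r - (K - lam_prev K D (2*i).+1)) %% lam_prev K D (2*i).+2 = c - (K - D - lam_prev K D (2*i).+2)]]].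
Proof.
rewrite /AIR /lam => /and3P[hr hc /or3P[/andP[h1 /eqP h2]|/hasP[i _ hi]|/hasP[i _ hi]]];
  split => //.
- by apply: Or31.
- apply: Or32; exists i; case/and5P: hi => _ _ h1 h2 /andP[h3 /eqP h4]; by split.
- apply: Or33; exists i; case/and5P: hi => _ h1 h2 h3 /eqP h4; by split.
Qed.

Definition colsupp K D c := [seq j <- iota 0 K | AIR K D j c].
Definition evrow K D c i :=
  K - lam_prev K D (2*i).+1 + (c - (K - D - lam_prev K D (2*i))) %% lam_prev K D (2*i).+1.

Lemma modn_eqI a q p rr : a = q * p + rr -> rr < p -> a %% p = rr.
Proof. by move=> -> h; rewrite modnMDl modn_small. Qed.

Lemma beta_pos K D j : 0 < beta K D j -> 0 < lam_prev K D j.+1.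
Proof. rewrite /beta /lam; case: (lam_prev K D j.+1) => //; by rewrite divn0. Qed.

Lemma NB_memP K D c i r : reflect (exists z j, [/\ z < i, 0 < j <= beta K D (2*z).+1 &
   r = c + (D - lam_prev K D (2*z).+1) + j * lam_prev K D (2*z).+2]) (r \in nu_base K D c i).
Proof.
apply: (iffP flattenP).
- case=> s /mapP[z hz ->] /mapP[j hj ->]; exists z, j.
  move: hz hj; rewrite !mem_iota /lam => hz hj; split=> //; lia.
- case=> z [j [hz hj ->]].
  exists [seq c + (D - lam K D (2 * z)) + j0 * lam K D (2 * z).+1 | j0 <- iota 1 (beta K D (2 * z).+1)].
  + by apply/mapP; exists z => //; rewrite mem_iota; lia.
  + by apply/mapP; exists j => //; rewrite mem_iota; lia.
Qed.

Lemma NB_S K D c i : nu_base K D c i.+1 = nu_base K D c i ++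
  [seq c + (D - lam K D (2 * i)) + j * lam K D (2 * i).+1 | j <- iota 1 (beta K D (2 * i).+1)].
Proof.
rewrite /nu_base.
have -> : iota 0 i.+1 = iota 0 i ++ [:: i] by rewrite -addn1 iotaD.
by rewrite map_cat flatten_cat /= cats0.
Qed.

Lemma NB_elt K D z j : 1 <= D -> D < K -> 0 < j <= beta K D (2*z).+1 ->
  [/\ 0 < lam_prev K D (2*z).+2,
      lam_prev K D (2*z).+1 = beta K D (2*z).+1 * lam_prev K D (2*z).+2 + lam_prev K D (2*z).+3,
      j * lam_prev K D (2*z).+2 <= lam_prev K D (2*z).+1 - lam_prev K D (2*z).+3 &
      lam_prev K D (2*z).+1 <= D].
Proof.
move=> hD hK /andP[hj1 hj2].
have hp : 0 < lam_prev K D (2*z).+2 by apply: beta_pos; lia.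
have he := Ldiv hp.
split => //; last exact: LleD.
have : j * lam_prev K D (2*z).+2 <= beta K D (2*z).+1 * lam_prev K D (2*z).+2 by apply: leq_mul.
lia.
Qed.

Lemma NB_off K D c i r : 1 <= D -> D < K -> r \in nu_base K D c i ->
  c < r <= c + (D - lam_prev K D (2*i).+1).
Proof.
move=> hD hK /NB_memP[z [j [hz hj ->]]].
case: (NB_elt hD hK hj) => hp he hjl hle.
have := @Lmono K D (2*z).+3 (2*i).+1; have := LleD K D (2*i).
move: hj => /andP[hj1 _].
have : 0 < j * lam_prev K D (2 * z).+2 by rewrite muln_gt0 hj1.
lia.
Qed.

Lemma NB_uniq K D c i : 1 <= D -> D < K -> uniq (nu_base K D c i).
Proof.
move=> hD hK; elim: i => [|i IH]; first by [].
rewrite NB_S cat_uniq IH /=.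
case: (posnP (lam K D (2*i).+1)) => hp.
  by rewrite /beta hp divn0.
apply/andP; split.
- apply/hasPn => r /mapP[j]; rewrite mem_iota => hj ->; apply/negP => /(NB_off hD hK).
  have : 0 < j * lam K D (2 * i).+1 by rewrite muln_gt0 hp; lia.
  rewrite /lam; lia.
- rewrite map_inj_uniq ?iota_uniq // => j1 j2 /eqP; rewrite eqn_add2l eqn_pmul2r //; by move/eqP.
Qed.

Lemma lev_uniq K D c i i' :
  K - D - lam_prev K D (2*i) <= c -> c < K - D - lam_prev K D (2*i).+2 ->
  K - D - lam_prev K D (2*i') <= c -> c < K - D - lam_prev K D (2*i').+2 -> i = i'.
Proof.
move=> h1 h2 h3 h4; case: (ltngtP i i') => // hlt.
- have := @Lmono K D (2*i).+2 (2*i'); lia.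
- have := @Lmono K D (2*i').+2 (2*i); lia.
Qed.

Lemma col_mem K D c i r : 1 <= D -> D < K -> c < K - D ->
  K - D - lam_prev K D (2*i) <= c -> c < K - D - lam_prev K D (2*i).+2 ->
  (r \in colsupp K D c) =
  [|| r == c, r \in nu_base K D c i | (0 < lam_prev K D (2*i).+1) && (r == evrow K D c i)].
Proof.
move=> hD hK hc h1 h2.
rewrite /colsupp mem_filter mem_iota add0n.
apply/idP/idP.
- case/andP => /AIR_elim [hr _ [[_ ->]|[i' [e1 e2 e3 e4]]|[z [o1 o2 o3 o4]]]] _.
  + by rewrite eqxx.
  + have ei := lev_uniq h1 h2 e2 e3; subst i'.
    apply/orP; right; apply/orP; right; apply/andP; split; first lia.
    by apply/eqP; rewrite /evrow e4; lia.
  + apply/orP; right; apply/orP; left; apply/NB_memP.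
    have hz : z < i.
      case: (ltnP z i) => // hzi; have := @Lmono K D (2*i).+2 (2*z).+2; lia.
    set p := lam_prev K D (2*z).+2.
    have hp : 0 < p by rewrite /p; lia.
    set a := r - (K - lam_prev K D (2 * z).+1).
    have he := Ldiv hp.
    have ha := divn_eq a p.
    exists z, (a %/ p).+1; split => //.
      apply/andP; split => //; rewrite ltn_divLR //.
      have : a < lam_prev K D (2 * z).+1 - lam_prev K D (2 * z).+3 by rewrite /a; lia.
      rewrite he -/p; lia.
    rewrite -/p (mulSn (a %/ p)). have := LleD K D (2*z). rewrite /a in ha o4 *. rewrite -/p in o4 ha o3. have := Lle_n K D (2*z). rewrite -/p. clearbody p. lia.
- case/or3P => [/eqP ->|/NB_memP[z [j [hz hj ->]]]|/andP[hp /eqP ->]].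
  + by rewrite AIR_top // hc eqxx; lia.
  + case: (NB_elt hD hK hj) => hp he hjl hle.
    have hm : lam_prev K D (2*i) <= lam_prev K D (2*z).+2 by apply: Lmono; lia.
    have hn := Lle_n K D (2*z).
    case: j hj hjl => [|j] hj hjl; first by move: hj.
    have hr : c + (D - lam_prev K D (2 * z).+1) + j.+1 * lam_prev K D (2 * z).+2 < K.
      lia.
    rewrite hr leq0n !andbT; apply: (@AIR_odd_intro K D _ _ z) => //; try lia.
    apply: (@modn_eqI _ j); last lia.
    rewrite (mulSn j) in hjl *; lia.
  + have hm := ltn_pmod (c - (K - D - lam_prev K D (2 * i))) hp.
    have hr : evrow K D c i < K by rewrite /evrow; have := LleD K D (2*i); lia.
    rewrite hr leq0n !andbT; apply: (@AIR_even_intro K D _ _ i) => //; rewrite /evrow; try lia.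
Qed.


Lemma lev_ex K D c : 1 <= D -> D < K -> c < K - D ->
  exists i, K - D - lam_prev K D (2*i) <= c /\ c < K - D - lam_prev K D (2*i).+2.
Proof.
move=> hD hK hc.
have [hl h0 _] := ell_spec hD hK.
have hex : exists i, K - D - lam_prev K D (2*i) <= c by exists 0; rewrite L0; lia.
have hb : forall i, K - D - lam_prev K D (2*i) <= c -> i <= K.
  move=> i hi; case: (leqP i K) => // hiK.
  have := @Lzero K D (ell K D).+1 (2*i) h0; lia.
case: (ex_maxnP hex hb) => i hi hmax; exists i; split => //.
case: (leqP (K - D - lam_prev K D (2 * i).+2) c) => // hle.
have := hmax i.+1; rewrite mul2S => /(_ hle); lia.
Qed.

Definition evl K D c i := if 0 < lam_prev K D (2*i).+1 then [:: evrow K D c i] else [::].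

Lemma col_perm K D c i : 1 <= D -> D < K -> c < K - D ->
  K - D - lam_prev K D (2*i) <= c -> c < K - D - lam_prev K D (2*i).+2 ->
  perm_eq (colsupp K D c) (c :: nu_base K D c i ++ evl K D c i).
Proof.
move=> hD hK hc h1 h2.
apply: uniq_perm.
- by rewrite filter_uniq // iota_uniq.
- rewrite /= mem_cat cat_uniq NB_uniq //= /evl.
  have hev : K - lam_prev K D (2*i).+1 <= evrow K D c i by rewrite /evrow; lia.
  have := LleD K D (2*i) => hLD.
  case: ifP => hp /=; rewrite ?andbT ?orbF.
  + apply/andP; split.
    * rewrite inE; apply/negP => /orP[|/eqP]; last by rewrite /evrow; lia.
      by move/(NB_off hD hK); lia.
    * by apply/negP => /(NB_off hD hK); lia.
  + by apply/negP => /(NB_off hD hK); lia.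
- move=> r; rewrite (col_mem r hD hK hc h1 h2) in_cons mem_cat /evl.
  by case: ifP => _ //=; rewrite ?inE ?orbF.
Qed.

Lemma sumx_cat K x s t : sumx K x (s ++ t) = sumx K x s (+) sumx K x t.
Proof. by rewrite /sumx big_cat. Qed.
Lemma sumx_cons K x a s : sumx K x (a :: s) = x (a %% K) (+) sumx K x s.
Proof. by rewrite /sumx big_cons. Qed.
Lemma sumx_nil K x : sumx K x [::] = false.
Proof. by rewrite /sumx big_nil. Qed.
Lemma sumx_perm K x s t : perm_eq s t -> sumx K x s = sumx K x t.
Proof. by move=> h; rewrite /sumx (perm_big _ h). Qed.

Lemma cw_sumx K D x c : cw K D x c = sumx K x (colsupp K D c).
Proof.
rewrite /cw /sumx /colsupp big_filter -(big_mkord xpredT (fun j => AIR K D j c && x j)).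
rewrite [RHS](big_mkcond) /= big_seq [RHS]big_seq.
rewrite /index_iota subn0. apply: eq_bigr => j; rewrite mem_iota add0n => /andP[_ hj].
by rewrite modn_small //; case: (AIR K D j c).
Qed.

Lemma iota_split a len M : a <= M < a + len ->
  iota a len = iota a (M - a) ++ M :: iota M.+1 (a + len - M.+1).
Proof.
move=> /andP[h1 h2].
rewrite {1}(_ : len = (M - a) + (a + len - M.+1).+1); last lia.
rewrite iotaD; congr (_ ++ _).
by have -> : a + (M - a) = M by lia.
Qed.

Lemma last_filter_iota (P : pred nat) a len M d : a <= M < a + len -> P M ->
  (forall r, M < r < a + len -> ~~ P r) -> last d (filter P (iota a len)) = M.
Proof.
move=> hM hP hr; rewrite (iota_split hM) filter_cat /= hP.
have -> : filter P (iota M.+1 (a + len - M.+1)) = [::].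
  apply/eqP; rewrite -[_ == _]negbK -has_filter; apply/hasPn => r.
  rewrite mem_iota => hr'; apply: hr; lia.
by rewrite last_cat.
Qed.

Lemma head_filter_iota (P : pred nat) a len m d : a <= m < a + len -> P m ->
  (forall c, a <= c < m -> ~~ P c) -> head d (filter P (iota a len)) = m.
Proof.
move=> hm hP hc; rewrite (iota_split hm) filter_cat /= hP.
have -> : filter P (iota a (m - a)) = [::].
  apply/eqP; rewrite -[_ == _]negbK -has_filter; apply/hasPn => r.
  rewrite mem_iota => hr'; apply: hc; lia.
by [].
Qed.

Lemma mod_gap a b c p : 0 < p -> a <= b -> b < c ->
  (b - a) %% p = (c - a) %% p -> b + p <= c.
Proof.
move=> hp h1 h2 /esym /eqP; rewrite eqn_mod_dvd ?(leq_sub2r a (ltnW h2)) //.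
move=> hd; have hpos : 0 < (c - a) - (b - a) by lia.
have := dvdn_leq hpos hd.
lia.
Qed.

Lemma side_off K D k e : k < e <= k + D -> sideinfo K D k e.
Proof.
move=> h; apply/hasP; exists (e - k); first by rewrite mem_iota; lia.
by have -> : k + (e - k) = e by lia.
Qed.

Lemma in_colsupp K D r c : (r \in colsupp K D c) = AIR K D r c.
Proof.
rewrite /colsupp mem_filter mem_iota add0n /=.
case h: (AIR K D r c) => //=; by case/AIR_elim: h.
Qed.

Lemma ddown_lev K D k i : 1 <= D -> D < K -> k < K - D ->
  K - D - lam_prev K D (2*i) <= k -> k < K - D - lam_prev K D (2*i).+2 ->
  0 < lam_prev K D (2*i).+1 -> ddown K D k = evrow K D k i - k.
Proof.
move=> hD hK hk h1 h2 hp.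
have hm := ltn_pmod (k - (K - D - lam_prev K D (2 * i))) hp.
have hL := LleD K D (2*i).
rewrite /ddown (@last_filter_iota _ _ _ (evrow K D k i)) //.
- by rewrite /evrow; lia.
- by rewrite -in_colsupp (col_mem _ hD hK hk h1 h2) hp eqxx !orbT.
- move=> r hr; rewrite -in_colsupp (col_mem _ hD hK hk h1 h2).
  apply/negP => /or3P[/eqP|/(NB_off hD hK)|/andP[_ /eqP]]; rewrite /evrow in hr *; lia.
Qed.

Lemma uphalf2 l : 2 * uphalf l = l + odd l.
Proof. rewrite uphalf_half; have := odd_double_half l; case: (odd l) => /=; lia. Qed.

Lemma bool3 (a b c : bool) : a = a (+) b (+) c (+) b (+) c.
Proof. by case: a; case: b; case: c. Qed.

Lemma part3 K D x : 1 <= D -> D < K ->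
  (forall k, K - D - lam K D (ell K D) <= k < K - D ->
     let nuk := (if odd (ell K D) then [::] else [:: k + D])
                  ++ nu_base K D k (uphalf (ell K D)) in
     x k = cw K D x k (+) sumx K x nuk
     /\ all (sideinfo K D k) nuk).
Proof.
move=> hD hK k /andP[hk1 hk2]; cbv zeta.
have [hlK h0 hpos] := ell_spec hD hK.
set l := ell K D in hlK h0 hpos hk1 *.
set i := uphalf l.
have hi := uphalf2 l; rewrite -/i in hi.
have h1 : K - D - lam_prev K D (2*i) <= k.
  case: (posnP l) => hl0.
    by rewrite /i hl0 /= L0; lia.
  have : lam_prev K D l.+1 <= lam_prev K D (2*i) by apply: Lmono; case: (odd l) hi; lia.
  rewrite /lam in hk1; lia.
have h2 : k < K - D - lam_prev K D (2*i).+2.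
  by rewrite (@Lzero K D l.+1 (2*i).+2) //; [lia | case: (odd l) hi; lia].
have hNB : forall e, e \in nu_base K D k i -> sideinfo K D k e.
  move=> e /(NB_off hD hK) he; apply: side_off; lia.
rewrite cw_sumx (sumx_perm K x (col_perm hD hK hk2 h1 h2)) /evl.
case ho: (odd l) hi => /= hi.
- have -> : lam_prev K D (2*i).+1 = 0 by rewrite (@Lzero K D l.+1 (2*i).+1) //; lia.
  rewrite /= sumx_cons cats0 (@modn_small k K); last lia.
  split; last by apply/allP.
  by case: (x k); case: (sumx K x _).
- have hp : 0 < lam_prev K D (2*i).+1 by apply: hpos; lia.
  rewrite hp /= sumx_cons sumx_cat sumx_cons sumx_nil sumx_cons (@modn_small k K); last lia.
  have -> : evrow K D k i = k + D.
    have he := Ldiv hp.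
    have hz : lam_prev K D (2*i).+2 = 0 by rewrite (@Lzero K D l.+1 (2*i).+2) //; lia.
    rewrite hz addn0 in he.
    have hb : 0 < beta K D (2*i).
      case: (posnP (beta K D (2*i))) => // hb0.
      move: he; rewrite hb0 mul0n => he.
      case: (posnP i) => hi0.
        move: he; rewrite hi0 /= L0; lia.
      have := hpos (2*i).-1; rewrite prednK; [lia| lia].
    have hmod : (k - (K - D - lam_prev K D (2 * i))) %% lam_prev K D (2 * i).+1
                = lam_prev K D (2*i).+1 - (K - D - k).
      apply: (@modn_eqI _ (beta K D (2*i)).-1); last lia.
      move: he; case: (beta K D (2*i)) hb => // b _; rewrite (mulSn b) /=.
      have el : l = 2 * i by lia.
      rewrite /lam el in hk1. have := L2le_n K D i. lia.
    have el : l = 2 * i by lia.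
    rewrite /evrow hmod; have := LleD K D (2*i); have := L2le_n K D i; rewrite /lam el in hk1; lia.
  split.
  + by case: (x k); case: (sumx K x (nu_base K D k i)); case: (x ((k + D) %% K)).
  + apply/andP; split; [apply: side_off; lia | by apply/allP].
Qed.

Lemma row_right K D r0 k c i : 1 <= D -> D < K -> r0 < K ->
  K - lam_prev K D (2*i).+1 <= r0 -> K - D - lam_prev K D (2*i) <= k ->
  (k - (K - D - lam_prev K D (2*i))) %% lam_prev K D (2*i).+1 = r0 - (K - lam_prev K D (2*i).+1) ->
  AIR K D r0 c -> k < c ->
  [\/ k + lam_prev K D (2*i).+1 <= c,
      [/\ K - D - lam_prev K D (2*i).+2 <= c, r0 < K - lam_prev K D (2*i).+3 &
          c = K - D - lam_prev K D (2*i).+2 + (r0 - (K - lam_prev K D (2*i).+1)) %% lam_prev K D (2*i).+2],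
      [/\ K - D - lam_prev K D (2*i).+2 <= c, K - lam_prev K D (2*i).+3 <= r0 &
          (c - (K - D - lam_prev K D (2*i).+2)) %% lam_prev K D (2*i).+3 = r0 - (K - lam_prev K D (2*i).+3)]
    | K - D - lam_prev K D (2*i).+4 <= c /\ K - lam_prev K D (2*i).+3 <= r0].
Proof.
move=> hD hK hr h1 h2 h3 /AIR_elim[_ hc [[hr0 _]|[i' [e1 e2 e3 e4]]|[z [o1 o2 o3 o4]]]] hkc.
- clear h3; have := LleD K D (2*i); lia.
- case: (ltngtP i' i) => hii.
  + clear h3 e4.
    have : lam_prev K D (2*i) <= lam_prev K D (2*i').+2 by apply: Lmono; lia.
    lia.
  + case: (ltngtP i' i.+1) => hii2; first lia.
    * clear h3 e4.
      have : lam_prev K D (2*i') <= lam_prev K D (2*i).+4 by apply: Lmono; lia.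
      have : lam_prev K D (2*i').+1 <= lam_prev K D (2*i).+3 by apply: Lmono; lia.
      move=> ha hb; apply: Or44; lia.
    * subst i'; rewrite mul2S in e1 e2 e3 e4; apply: Or43; split => //.
  + subst i'; apply: Or41; apply: (@mod_gap (K - D - lam_prev K D (2 * i))) => //.
    * clear h3 e4; lia.
    * by rewrite h3 e4.
- case: (ltngtP z i) => hzi.
  + clear h3 o4.
    have : lam_prev K D (2*i).+1 <= lam_prev K D (2*z).+3 by apply: Lmono; lia.
    lia.
  + clear h3 o4.
    have : lam_prev K D (2*z).+2 <= lam_prev K D (2*i).+4 by apply: Lmono; lia.
    have : lam_prev K D (2*z).+1 <= lam_prev K D (2*i).+3 by apply: Lmono; lia.
    move=> ha hb; apply: Or44; lia.
  + subst z; apply: Or42; split => //; rewrite o4; clear h3 o4; lia.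
Qed.

Lemma evrow_shift K D k i : K - D - lam_prev K D (2*i) <= k ->
  evrow K D (k + lam_prev K D (2*i).+1) i = evrow K D k i.
Proof.
move=> h; rewrite /evrow.
have -> : k + lam_prev K D (2 * i).+1 - (K - D - lam_prev K D (2 * i)) =
          (k - (K - D - lam_prev K D (2 * i))) + lam_prev K D (2 * i).+1 by lia.
by rewrite modnDr.
Qed.

Lemma part1 K D x : 1 <= D -> D < K ->
  (forall i k, i <= uphalf (ell K D) -> Dset K D i k ->
     let m := k + mu K D k in
     let nuk := nu_base K D k i in
     let num := m :: nu_base K D m i in
     x k = cw K D x k (+) cw K D x m (+) sumx K x nuk (+) sumx K x num
     /\ all (sideinfo K D k) (nuk ++ num)).
Proof.
move=> hD hK i k _ /andP[hk1 hk2]; cbv zeta.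
rewrite /lam in hk2.
set p := lam_prev K D (2*i).+1 in hk2 *.
have hp : 0 < p by case: (posnP p) hk2 => h; [rewrite h muln0; lia | lia].
have hb : 1 < beta K D (2*i).
  case: (ltnP 1 (beta K D (2*i))) hk2 => // hb; case: (beta K D (2*i)) hb => [|[|]] //= _; lia.
have he := Ldiv hp; rewrite -/p in he.
have hn := L2le_n K D i.
have hLD := LleD K D (2*i); rewrite -/p in hLD.
have hk : k < K - D - lam_prev K D (2*i).+2 - p.
  move: hk2; rewrite mulnBl mul1n; lia.
have hk2' : k < K - D - lam_prev K D (2*i).+2 by lia.
have hkn : k < K - D by lia.
have hm1 : K - D - lam_prev K D (2*i) <= k + p by lia.
have hm2 : k + p < K - D - lam_prev K D (2*i).+2 by lia.
have hmn : k + p < K - D by lia.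
set r0 := evrow K D k i.
have hmod := ltn_pmod (k - (K - D - lam_prev K D (2 * i))) hp.
have hr0 : K - p <= r0 < K by rewrite /r0 /evrow -/p; lia.
have hdd : ddown K D k = r0 - k by apply: ddown_lev.
have hmu : mu K D k = p.
  rewrite /mu hdd (_ : k + (r0 - k) = r0); last lia.
  rewrite (@head_filter_iota _ _ _ (k + p)); first lia; first lia.
  - rewrite -in_colsupp (col_mem _ hD hK hmn hm1 hm2) evrow_shift // -/r0 -/p hp eqxx.
    by rewrite !orbT.
  - move=> c hc; apply/negP => hA.
    have hmodk : (k - (K - D - lam_prev K D (2 * i))) %% p = r0 - (K - p).
      by rewrite /r0 /evrow -/p addKn.
    have hc' : k < c by lia.
    have hL4 : lam_prev K D (2*i).+4 <= lam_prev K D (2*i).+2 by apply: Lmono; lia.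
    case/andP: hr0 => hr0a hr0b.
    case: (row_right hD hK hr0b hr0a hk1 hmodk hA hc') => [h|[h _ _]|[h _ _]|[h _]]; lia.
rewrite hmu !cw_sumx (sumx_perm K x (col_perm hD hK hkn hk1 hk2')).
rewrite (sumx_perm K x (col_perm hD hK hmn hm1 hm2)) /evl -/p hp evrow_shift // -/r0.
rewrite !sumx_cons !sumx_cat !sumx_cons sumx_nil (@modn_small k K); last lia.
split.
- by case: (x k); case: (x ((k + p) %% K)); case: (x (r0 %% K));
     case: (sumx K x (nu_base K D k i)); case: (sumx K x (nu_base K D (k + p) i)).
- rewrite all_cat /=; apply/and3P; split.
  + by apply/allP => e /(NB_off hD hK) he'; apply: side_off; rewrite -/p in he'; lia.
  + by apply: side_off; lia.
  + by apply/allP => e /(NB_off hD hK) he'; apply: side_off; rewrite -/p in he'; lia.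
Qed.

Ltac clear_mod := repeat match goal with
  | H : context [_ %% _] |- _ => clear H
  | H : context [_ %/ _] |- _ => clear H end.



Lemma side_crit K D k j : D < K -> K - D <= k < K -> j < K -> (k < j \/ j + (K - D) <= k) ->
  sideinfo K D k j.
Proof.
move=> hK hk hj [h|h]; first by apply: side_off; lia.
apply/hasP; exists (j + K - k); first by rewrite mem_iota; lia.
have -> : k + (j + K - k) = j + K by lia.
by rewrite modnDr.
Qed.

Lemma col4 K D k : 1 <= D -> D < K -> K - D <= k < K ->
  AIR K D k (k %% (K - D)) /\
  (forall j, AIR K D j (k %% (K - D)) -> j != k -> k < j \/ j + (K - D) <= k).
Proof.
move=> hD hK /andP[hk1 hk2].
set n := K - D in hk1 *.
have hn : 0 < n by rewrite /n; lia.
have hk'n : k %% n < n by rewrite ltn_mod.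
have ekn : (k - n) %% n = k %% n by rewrite -{2}(subnK hk1) modnDr.
have hk'k : k %% n + n <= k by have := leq_mod (k - n) n; rewrite ekn; lia.
move: hk'n hk'k ekn; move: (k %% n) => k' hk'n hk'k ekn.
have hL2 : lam_prev K D 2 = n %% D by rewrite LSS L1 L0; case: eqP => //; lia.
case: (leqP D n) => hDn.
-
  have ek : k' = k - n by rewrite -ekn; apply: (@modn_eqI _ 0); lia.
  have hq : 0 < n %/ D by rewrite divn_gt0 //.
  have hqd : D <= n %/ D * D by rewrite leq_pmull.
  have hdn := divn_eq n D.
  have hDD : D <= n - n %% D by lia.
  move: hL2 hDD; move: (n %% D) => rr hL2 hDD; clear hq hqd hdn.
  have h1 : K - D - lam_prev K D (2*0) <= k' by rewrite muln0 L0; lia.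
  have h2 : k' < K - D - lam_prev K D (2*0).+2 by rewrite muln0 hL2 -/n; lia.
  have hev : evrow K D k' 0 = k.
    rewrite /evrow muln0 L0 L1 -/n subnn subn0 modn_small; lia.
  have hcm := fun r => col_mem r hD hK hk'n h1 h2.
  split.
  + by rewrite -in_colsupp hcm hev eqxx muln0 L1 hD !orbT.
  + move=> j; rewrite -in_colsupp hcm hev => /or3P[/eqP ->|/NB_memP[z [jj [hz _]]]|/andP[_ /eqP ->]].
    * lia.
    * lia.
    * by rewrite eqxx.
-
  have hL2n : lam_prev K D 2 = n by rewrite hL2 modn_small.
  clear hL2.
  have hpos2 : 0 < lam_prev K D 2 by lia.
  have he1 := Ldiv hpos2; rewrite L1 hL2n in he1.
  set s := lam_prev K D 3 in he1 *.
  have hs : s < n by rewrite /s -hL2n; apply: Llt_step.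
  case: (ltnP k (K - s)) => hks.
  +
    have hA : AIR K D k k'.
      apply: (@AIR_odd_intro K D _ _ 0) => //; rewrite ?muln0 ?L1 ?hL2n -/n //; try lia.
    split => //.
    have [ic [hi1 hi2]] := lev_ex hD hK hk'n.
    have hic : 0 < ic.
      case: (posnP ic) hi2 => // ->; rewrite muln0 hL2n; lia.
    move=> j; rewrite -in_colsupp (col_mem j hD hK hk'n hi1 hi2) => /or3P[/eqP ->|hNB|/andP[hp /eqP ->]] hjk.
    * by right.
    * case/NB_memP: hNB hjk => z [jj [hz hjj ->]] hjk.
      case: (posnP z) => hz0.
      - subst z; rewrite muln0 L1 subnn addn0 hL2n in hjk *.
        have hjm : (k' + jj * n) %% n = k' by rewrite addnC modnMDl modn_small.
        have hkm : k %% n = k' by rewrite -ekn -{1}(subnK hk1) modnDr.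
        case: (ltngtP (k' + jj * n) k) => hc.
        + right; have := @mod_gap 0 (k' + jj * n) k n hn (leq0n _) hc.
          by rewrite !subn0 hjm hkm => /(_ erefl).
        + by left.
        + by rewrite hc eqxx in hjk.
      - left.
        case: (NB_elt hD hK hjj) => hp' _ _ hle.
        have : lam_prev K D (2*ic) <= lam_prev K D (2*z).+2 by apply: Lmono; lia.
        have : lam_prev K D (2*z).+1 <= s by apply: Lmono; lia.
        have : lam_prev K D (2*z).+2 <= jj * lam_prev K D (2*z).+2 by rewrite leq_pmull //; lia.
        clear_mod; lia.
    * left; have : lam_prev K D (2*ic).+1 <= s by apply: Lmono; lia.
      rewrite /evrow.
      move: (_ %% _) => w; clear_mod; lia.
  +
    have hs0 : 0 < s by lia.
    set b := beta K D 1 in he1.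
    have ek : k' = k - (n + b * n).
      rewrite -ekn; apply: (@modn_eqI _ b); rewrite ?mulSn; clear_mod; lia.
    have he2 := Ldiv hs0; rewrite hL2n in he2.
    have hb2 : 0 < beta K D 2.
      case: (posnP (beta K D 2)) he2 => // ->; rewrite mul0n => e.
      have := @Llt_step K D 2 hs0; rewrite -/s; lia.
    have hb2' : s <= beta K D 2 * s by rewrite leq_pmull.
    have h1 : K - D - lam_prev K D (2*1) <= k' by rewrite muln1 hL2n; lia.
    have h2 : k' < K - D - lam_prev K D (2*1).+2 by rewrite muln1 -/n; clear_mod; lia.
    have hev : evrow K D k' 1 = k.
      rewrite /evrow muln1 hL2n -/n -/s subnn subn0 (@modn_small k' s); clear_mod; lia.
    have hcm := fun r => col_mem r hD hK hk'n h1 h2.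
    rewrite muln1 -/s in hcm.
    split.
    + by rewrite -in_colsupp hcm hev eqxx hs0 !orbT.
    + move=> j; rewrite -in_colsupp hcm hev => /or3P[/eqP ->|hNB|/andP[_ /eqP ->]] hjk.
      * by right.
      * right; case/NB_memP: hNB => z [jj [hz hjj ->]].
        have z0 : z = 0 by lia.
        subst z; rewrite muln0 L1 subnn addn0 hL2n.
        have : jj * n <= b * n by apply: leq_mul; case/andP: hjj.
        clear_mod; lia.
      * by rewrite eqxx in hjk.
Qed.

Lemma part4 K D x : 1 <= D -> D < K ->
  (forall k, K - D <= k < K ->
     let k' := k %% (K - D) in
     let nuk' := [seq j <- iota 0 K | AIR K D j k' && (j != k)] in
     AIR K D k k'
     /\ x k = cw K D x k' (+) sumx K x nuk'
     /\ all (sideinfo K D k) nuk').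
Proof.
move=> hD hK k hk; cbv zeta.
have [hA hS] := col4 hD hK hk.
set k' := k %% (K - D) in hA hS *.
have hnu : [seq j <- iota 0 K | AIR K D j k' && (j != k)] = rem k (colsupp K D k').
  rewrite rem_filter; last by rewrite filter_uniq // iota_uniq.
  rewrite /colsupp -filter_predI; apply: eq_filter => j /=; by rewrite andbC.
rewrite hnu; split => //; split.
- rewrite cw_sumx (sumx_perm K x (perm_to_rem (_ : k \in colsupp K D k'))); last by rewrite in_colsupp.
  rewrite sumx_cons modn_small; last lia.
  by case: (x k); case: (sumx K x _).
- apply/allP => j; rewrite -hnu mem_filter mem_iota => /and3P[/andP[hj hjk] _ hjK].
  apply: side_crit; [lia|lia|lia|by apply: hS].
Qed.


Lemma evrow_E K D c i : 1 <= D -> D < K -> 0 < lam_prev K D (2*i).+1 ->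
  0 < beta K D (2*i) ->
  lam_prev K D (2*i) = beta K D (2*i) * lam_prev K D (2*i).+1 + lam_prev K D (2*i).+2 ->
  K - D - lam_prev K D (2*i).+1 - lam_prev K D (2*i).+2 <= c ->
  c < K - D - lam_prev K D (2*i).+2 ->
  evrow K D c i = c + D + lam_prev K D (2*i).+2.
Proof.
move=> hD hK hp hb he h1 h2.
have hn := L2le_n K D i.
have hLD := LleD K D (2*i).
have hbp : lam_prev K D (2*i).+1 <= beta K D (2*i) * lam_prev K D (2*i).+1 by rewrite leq_pmull.
have hm : (c - (K - D - lam_prev K D (2 * i))) %% lam_prev K D (2 * i).+1 =
          c - (K - D - lam_prev K D (2*i).+1 - lam_prev K D (2*i).+2).
  apply: (@modn_eqI _ (beta K D (2*i)).-1); last lia.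
  move: he; case: (beta K D (2*i)) hb => // b _; rewrite (mulSn b) /= => he; lia.
rewrite /evrow hm; lia.
Qed.

Lemma low_uniq K D m i cc r0 : 1 <= D -> D < K -> 0 < lam_prev K D (2*i).+2 ->
  r0 = m + (D - lam_prev K D (2*i).+1) + cc.+1 * lam_prev K D (2*i).+2 ->
  uniq (m :: nu_base K D m i ++
        [seq m + (D - lam K D (2 * i)) + j * lam K D (2 * i).+1 | j <- iota 1 cc] ++ [:: r0]).
Proof.
move=> hD hK hq hr0.
rewrite /lam; set q := lam_prev K D (2*i).+2 in hq hr0 *.
set p := lam_prev K D (2*i).+1 in hr0 *.
have hext : forall e, e \in [seq m + (D - p) + j * q | j <- iota 1 cc] ->
   m + (D - p) + q <= e <= m + (D - p) + cc * q.
  move=> e /mapP[j]; rewrite mem_iota => hj ->.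
  have : q <= j * q by rewrite leq_pmull; lia.
  have : j * q <= cc * q by apply: leq_mul; lia.
  lia.
have hr0' : r0 = m + (D - p) + cc * q + q by rewrite hr0 mulSn; lia.
rewrite /= !mem_cat cat_uniq NB_uniq //= !inE.
apply/and3P; split.
- apply/negP => /or3P[/(NB_off hD hK)|/hext|/eqP]; lia.
- apply/negP => /hasP[e he1 he2]; have := NB_off hD hK he2; rewrite -/p.
  by move: he1; rewrite mem_cat inE => /orP[/hext|/eqP ->]; lia.
- rewrite cat_uniq /= orbF andbT; apply/andP; split.
  + rewrite map_inj_uniq ?iota_uniq // => j1 j2 /eqP; rewrite eqn_add2l eqn_pmul2r //; by move/eqP.
  + apply/negP => /hext; lia.
Qed.

Ltac lia' := clear_mod; lia.

Lemma E_struct K D i k : 1 <= D -> D < K ->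
  0 < lam_prev K D (2*i).+1 -> 0 < lam_prev K D (2*i).+2 -> 0 < beta K D (2*i) ->
  lam_prev K D (2*i) = beta K D (2*i) * lam_prev K D (2*i).+1 + lam_prev K D (2*i).+2 ->
  K - D - lam_prev K D (2*i).+1 - lam_prev K D (2*i).+2 <= k ->
  k < K - D - lam_prev K D (2*i).+2 ->
  exists m, [/\ mu K D k = m - k, k < m,
     m + (k - (K - D - lam_prev K D (2*i).+1 - lam_prev K D (2*i).+2)) %/ lam_prev K D (2*i).+2
         * lam_prev K D (2*i).+2 = k + lam_prev K D (2*i).+1,
     m < K - D &
     perm_eq [seq r <- iota 0 (k + D + lam_prev K D (2*i).+2).+1 | AIR K D r m]
       (m :: nu_base K D m i ++
        [seq m + (D - lam K D (2 * i)) + j * lam K D (2 * i).+1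
          | j <- iota 1 ((k - (K - D - lam_prev K D (2*i).+1 - lam_prev K D (2*i).+2)) %/ lam_prev K D (2*i).+2)]
        ++ [:: k + D + lam_prev K D (2*i).+2])].
Proof.
move=> hD hK hp hq hb he hk1 hk2.
have hev := evrow_E hD hK hp hb he hk1 hk2.
rewrite /lam.
set p := lam_prev K D (2*i).+1 in hp he hk1 hev *.
set q := lam_prev K D (2*i).+2 in hq he hk1 hk2 hev *.
set L := lam_prev K D (2*i) in he *.
have hn : L <= K - D := L2le_n K D i.
have hLD : p <= D := LleD K D (2*i).
have hbp : p <= beta K D (2*i) * p by rewrite leq_pmull.
have hqn : q <= K - D := Lle_n K D (2*i).
have hlev1 : K - D - L <= k by lia'.
have hkn : k < K - D by lia'.
set r0 := k + D + q.
have hr0K : r0 < K by rewrite /r0; lia'.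
have hr0p : K - p <= r0 by rewrite /r0; lia'.
have hmodk : (k - (K - D - L)) %% p = r0 - (K - p).
  by move: hev; rewrite /evrow -/p -/L; move: (_ %% _) => md; rewrite /r0; lia'.
have hdd : ddown K D k = D + q.
  by rewrite (ddown_lev hD hK hkn hlev1 hk2 hp) hev; lia'.
set w := k - (K - D - p - q).
have hmu0 : forall m, k < m < K - D -> AIR K D r0 m ->
    (forall c, k.+1 <= c < m -> ~~ AIR K D r0 c) -> mu K D k = m - k.
  move=> m hm hA hc; rewrite /mu hdd (_ : k + (D + q) = r0); last by rewrite /r0; lia'.
  by rewrite (@head_filter_iota _ _ _ m) //; lia'.
have hs1 := @Lle_step K D (2*i).+1.
rewrite -/q in hs1.
set s := lam_prev K D (2*i).+3 in hs1 *.
have he' := Ldiv hq; rewrite -/p -/q -/s in he'.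
set b1 := beta K D (2*i).+1 in he' *.
case: (ltnP r0 (K - s)) => hAB.
-
  have hw := divn_eq w q; have hwq := ltn_pmod w hq.
  move Ewr : (w %% q) hw hwq => wr hw hwq.
  move Ecc : (w %/ q) hw => cc hw.
  have hcc : cc < b1.
    rewrite -(ltn_pmul2r hq); have : w < p - s by rewrite /w; lia'.
    lia'.
  set m := K - D - q + wr.
  have hmn : m < K - D by rewrite /m; lia'.
  have hmcc : m + cc * q = k + p by rewrite /m; lia'.
  exists m; split => //.
  + apply: hmu0; first by rewrite /m; lia'.
    * apply: (@AIR_odd_intro K D _ _ i) => //; rewrite -/p -/q -/s /m; try (lia').
      rewrite (_ : r0 - (K - p) = w); last by rewrite /r0 /w; lia'.
      by rewrite Ewr; lia'.
    * move=> c hc; apply/negP => hA.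
      have hc' : k < c by lia'.
      case: (row_right hD hK hr0K hr0p hlev1 hmodk hA hc'); rewrite -/p -/q -/s.
      - lia'.
      - case=> _ _; rewrite (_ : r0 - (K - p) = w); last by rewrite /r0 /w; lia'.
        rewrite Ewr; lia'.
      - case=> _; lia'.
      - case=> _; lia'.
  + by rewrite /m; lia'.
  + have [im [him1 him2]] := lev_ex hD hK hmn.
    have him : i < im.
      case: (ltnP i im) => // hle.
      have : q <= lam_prev K D (2*im).+2 by apply: Lmono; lia'.
      rewrite /m in him2; lia'.
    have hsim : lam_prev K D (2*im).+1 <= s by apply: Lmono; lia'.
    apply: uniq_perm; first by rewrite filter_uniq // iota_uniq.
      by apply: low_uniq => //; rewrite -/p -/q (mulSn cc) /r0; lia'.
    move=> r; rewrite mem_filter mem_iota add0n -in_colsupp (col_mem r hD hK hmn him1 him2).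
    rewrite inE mem_cat mem_cat inE.
    apply/idP/idP.
    * case/andP => /or3P[/eqP ->|hNB|/andP[hpm /eqP ->]] /andP[_ hr].
      - by rewrite eqxx.
      - case/NB_memP: hNB hr => z [jj [hz hjj ->]] hr.
        case: (ltngtP z i) => hzi.
        + by apply/orP; right; apply/orP; left; apply/NB_memP; exists z, jj.
        + case: (NB_elt hD hK hjj) => hp' _ _ hle.
          have : lam_prev K D (2*im) <= lam_prev K D (2*z).+2 by apply: Lmono; lia'.
          have : lam_prev K D (2*z).+1 <= s by apply: Lmono; lia'.
          have : lam_prev K D (2*z).+2 <= jj * lam_prev K D (2*z).+2 by rewrite leq_pmull //; lia'.
          rewrite /r0 /m in hr *; lia'.
        + subst z; rewrite -/p -/q in hr *.
          case: (ltngtP jj cc.+1) => hj.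
          * apply/orP; right; apply/orP; right; apply/orP; left.
            by apply/mapP; exists jj => //; rewrite mem_iota; lia'.
          * have : cc.+2 * q <= jj * q by apply: leq_mul.
            rewrite (mulSn cc.+1) (mulSn cc); rewrite /r0 in hr; lia'.
          * subst jj; apply/orP; right; apply/orP; right; apply/orP; right.
            rewrite -/p -/q (mulSn cc) /r0; lia'.
      - move: hr; rewrite /evrow; move: (_ %% _) => md; rewrite /r0; lia'.
    * have hmr0 : m <= r0 by rewrite /r0; lia'.
      case/or4P => [/eqP ->|hNB|hext|/eqP ->].
      - by rewrite eqxx /= ltnS hmr0.
      - have hr' : r < r0.+1 by have := NB_off hD hK hNB; rewrite -/p /r0; lia'.
        rewrite hr' leq0n !andbT; apply/orP; right; apply/orP; left.
        case/NB_memP: hNB => z [jj [hz hjj ->]]; apply/NB_memP; exists z, jj; split => //; lia'.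
      - case/mapP: hext => j; rewrite mem_iota => hj ->.
        have : j * q <= cc * q by apply: leq_mul; lia'.
        move=> hjq; have hr' : m + (D - p) + j * q < r0.+1 by rewrite /r0; lia'.
        rewrite hr' leq0n !andbT.
        apply/orP; right; apply/orP; left; apply/NB_memP; exists i, j; split => //.
        by rewrite -/b1; lia'.
      - rewrite ltnSn leq0n !andbT; apply/orP; right; apply/orP; left.
        apply/NB_memP; exists i, cc.+1; split => //.
        by rewrite -/p -/q (mulSn cc) /r0; lia'.
-
  have hs0 : 0 < s by lia'.
  have hcc : w %/ q = b1.
    rewrite (_ : w = b1 * q + (s - (K - r0))); last by rewrite /w /r0; lia'.
    by rewrite divnMDl // divn_small; [lia' | lia'].
  rewrite hcc.
  have he2 := Ldiv hs0; rewrite -/q -/s in he2.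
  set b2 := beta K D (2*i).+2 in he2.
  have hL4 := @Llt_step K D (2*i).+2 hs0; rewrite -/s in hL4.
  have hb2 : s <= b2 * s.
    rewrite leq_pmull //; case: (posnP b2) he2 => // ->; lia'.
  set m := k + s.
  have hmn : m < K - D by rewrite /m; lia'.
  have hm1 : K - D - lam_prev K D (2*i.+1) <= m by rewrite mul2S /m; lia'.
  have hm2 : m < K - D - lam_prev K D (2*i.+1).+2 by rewrite mul2S /m; lia'.
  have hevm : evrow K D m i.+1 = r0.
    rewrite /evrow mul2S -/q -/s (@modn_small _ s); rewrite /m /r0; lia'.
  have hcm := fun r => col_mem r hD hK hmn hm1 hm2.
  rewrite hevm mul2S -/s hs0 /= in hcm.
  exists m; split => //.
  + apply: hmu0; first by rewrite /m; lia'.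
    * by rewrite -in_colsupp hcm eqxx !orbT.
    * move=> c hc; apply/negP => hA.
      have hc' : k < c by lia'.
      case: (row_right hD hK hr0K hr0p hlev1 hmodk hA hc'); rewrite -/p -/q -/s.
      - rewrite /m; lia'.
      - case=> _; lia'.
      - case=> h1 h2 h3; have := leq_mod (c - (K - D - q)) s; rewrite h3 /m; lia'.
      - case=> h1 _; rewrite /m in hc; lia'.
  + by rewrite /m; lia'.
  + by rewrite /m; lia'.
  + apply: uniq_perm; first by rewrite filter_uniq // iota_uniq.
      by apply: low_uniq => //; rewrite -/p -/q (mulSn b1) /m /r0; lia'.
    have hmr : m < r0.+1 by rewrite /m /r0; lia'.
    move=> r; rewrite mem_filter mem_iota add0n -in_colsupp hcm NB_S /lam -/p -/q -/b1.
    rewrite in_cons !mem_cat in_cons in_nil orbF leq0n /=.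
    apply/idP/idP => [/andP[h _]|h]; first by rewrite !orbA in h *.
    apply/andP; split; first by rewrite !orbA in h *.
    case/or4P: h => [/eqP->|hN|hX|/eqP->] //.
    - by have := NB_off hD hK hN; rewrite -/p /r0 /m; lia'.
    - case/mapP: hX => j; rewrite mem_iota => hj ->.
      have : j * q <= b1 * q by apply: leq_mul; lia'.
      rewrite /r0 /m; lia'.
Qed.


Lemma part2 K D x : 1 <= D -> D < K ->
  (forall i k, i < uphalf (ell K D) -> Eset K D i k ->
     let m := k + mu K D k in
     let ts := tlist K D k in
     let nuk := nu_base K D k i in
     let num := m :: nu_base K D m i
                  ++ [seq m + (D - lam K D (2 * i)) + j * lam K D (2 * i).+1
                     | j <- iota 1 (cE K D i k)] in
     let nut := fun t => (k + t) :: nu_base K D (k + t) i in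
     x k = cw K D x k (+) cw K D x m (+) \big[addb/false]_(t <- ts) cw K D x (k + t)
           (+) sumx K x nuk (+) sumx K x num
           (+) \big[addb/false]_(t <- ts) sumx K x (nut t)
     /\ all (sideinfo K D k) (nuk ++ num ++ flatten [seq nut t | t <- ts])).
Proof.
move=> hD hK i k hi /andP[hk1 hk2]; cbv zeta.
have [hlK h0 hpos] := ell_spec hD hK.
have hi2 := uphalf2 (ell K D).
have hp : 0 < lam_prev K D (2*i).+1 by apply: hpos; lia'.
have hq : 0 < lam_prev K D (2*i).+2 by apply: hpos; lia'.
have he := Ldiv hp.
rewrite /lam in hk1 hk2.
set p := lam_prev K D (2*i).+1 in hp he hk1 *.
set q := lam_prev K D (2*i).+2 in hq he hk2 *.
set L := lam_prev K D (2*i) in he hk1.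
have hn : L <= K - D := L2le_n K D i.
have hLD : p <= D := LleD K D (2*i).
have hb : 0 < beta K D (2*i).
  case: (posnP (beta K D (2*i))) he hk1 => // ->; rewrite mul0n add0n => e h; lia'.
have hbp : p <= beta K D (2*i) * p by rewrite leq_pmull.
have hk1' : K - D - p - q <= k by move: hk1; rewrite mulnBl mul1n; lia'.
have ecE : cE K D i k = (k - (K - D - p - q)) %/ q.
  rewrite /cE /lam -/p -/q -/L; congr (_ %/ _); congr (_ - _).
  rewrite mulnBl mul1n; lia'.
have [m [hmu hkm hmcc hmn hperm]] := E_struct hD hK hp hq hb he hk1' hk2.
rewrite -/p -/q -ecE in hmcc hperm.
set cc := cE K D i k in hmcc hperm *.
have hkn : k < K - D by lia'.
have hlev1 : K - D - L <= k by lia'.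
have hev := evrow_E hD hK hp hb he hk1' hk2; rewrite -/p -/q in hev.
have hdd : ddown K D k = D + q by rewrite (ddown_lev hD hK hkn hlev1 hk2 hp) hev; lia'.
set r0 := k + D + q in hev hperm.
have hr0K : r0 < K by rewrite /r0; lia'.
have -> : k + mu K D k = m by rewrite hmu; lia'.
set high := [seq r <- iota r0.+1 (K - r0.+1) | AIR K D r m].
have hts : tlist K D k = [seq r - r0 | r <- high].
  by rewrite /tlist hdd (_ : k + mu K D k = m) ?hmu; [rewrite /r0 addnA | lia'].
have hhigh : forall r, r \in high -> r0 < r < K.
  move=> r; rewrite mem_filter mem_iota => /andP[_]; lia'.
have hcolt : forall r, r \in high ->
    cw K D x (k + (r - r0)) = sumx K x ((k + (r - r0)) :: nu_base K D (k + (r - r0)) i) (+) x (r %% K).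
  move=> r /hhigh hr.
  have h1 : K - D - p - q <= k + (r - r0) by lia'.
  have h2 : k + (r - r0) < K - D - q by rewrite /r0 in hr; lia'.
  have h1' : K - D - L <= k + (r - r0) by lia'.
  have hc : k + (r - r0) < K - D by lia'.
  rewrite cw_sumx (sumx_perm K x (col_perm hD hK hc h1' h2)) /evl -/p hp.
  rewrite (evrow_E hD hK hp hb he h1 h2) -/q (_ : k + (r - r0) + D + q = r); last by rewrite /r0 in hr; lia'.
  rewrite !sumx_cons sumx_cat sumx_cons sumx_nil.
  by case: (x _); case: (x _); case: (sumx _ _ _).
have hC : \big[addb/false]_(t <- tlist K D k) cw K D x (k + t) =
    \big[addb/false]_(t <- tlist K D k) sumx K x ((k + t) :: nu_base K D (k + t) i) (+) sumx K x high.
  rewrite hts !big_map /sumx -big_split /=; apply: eq_big_seq => r hr.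
  by rewrite hcolt.
rewrite hC.
have hsplit : colsupp K D m = [seq r <- iota 0 r0.+1 | AIR K D r m] ++ high.
  rewrite /colsupp /high -filter_cat; congr (filter _ _).
  by rewrite -{1}(subnKC hr0K) iotaD add0n.
have hcolk := col_perm hD hK hkn hlev1 hk2.
rewrite /evl -/p hp hev in hcolk.
rewrite !cw_sumx (sumx_perm K x hcolk) hsplit sumx_cat (sumx_perm K x hperm).
rewrite !sumx_cons !sumx_cat !sumx_cons !sumx_nil (@modn_small k K); last lia'.
split.
- move: (x k) (x (r0 %% K)) (x (m %% K)) (sumx K x (nu_base K D k i)) (sumx K x (nu_base K D m i))
        (sumx K x high) (sumx K x [seq _ | j <- iota 1 cc]) => a1 a2 a3 a4 a5 a6 a7.
  move: (\big[addb/false]_(t <- tlist K D k) _) => a8.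
  by case: a1; case: a2; case: a3; case: a4; case: a5; case: a6; case: a7; case: a8.
- have hmp : m <= k + p by lia'.
  rewrite !all_cat /=; repeat (apply/andP; split).
  + by apply/allP => e /(NB_off hD hK) he'; apply: side_off; rewrite -/p in he'; lia'.
  + by apply: side_off; lia'.
  + rewrite all_cat; apply/andP; split.
    * by apply/allP => e /(NB_off hD hK) he'; apply: side_off; rewrite -/p in he'; lia'.
    * apply/allP => e /mapP[j]; rewrite mem_iota => hj ->.
      have : j * q <= cc * q by apply: leq_mul; lia'.
      by move=> hjq; apply: side_off; rewrite /lam -/p -/q; lia'.
  + apply/allP => e /flattenP[s /mapP[t ht ->]].
    move: ht; rewrite hts => /mapP[r /hhigh hr ->].
    rewrite inE => /orP[/eqP ->|/(NB_off hD hK) he']; apply: side_off; rewrite /r0 in hr; try rewrite -/p in he'; lia'.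
Qed.

Theorem theorem2 (K D : nat) (x : nat -> bool) :
  1 <= D -> D <= K - 1 ->
  (* (i) *)
  (forall i k, i <= uphalf (ell K D) -> Dset K D i k ->
     let m := k + mu K D k in
     let nuk := nu_base K D k i in
     let num := m :: nu_base K D m i in
     x k = cw K D x k (+) cw K D x m (+) sumx K x nuk (+) sumx K x num
     /\ all (sideinfo K D k) (nuk ++ num))
  /\
  (* (ii) *)
  (forall i k, i < uphalf (ell K D) -> Eset K D i k ->
     let m := k + mu K D k in
     let ts := tlist K D k in
     let nuk := nu_base K D k i in
     let num := m :: nu_base K D m i
                  ++ [seq m + (D - lam K D (2 * i)) + j * lam K D (2 * i).+1
                     | j <- iota 1 (cE K D i k)] in
     let nut := fun t => (k + t) :: nu_base K D (k + t) i in
     x k = cw K D x k (+) cw K D x m (+) \big[addb/false]_(t <- ts) cw K D x (k + t)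
           (+) sumx K x nuk (+) sumx K x num
           (+) \big[addb/false]_(t <- ts) sumx K x (nut t)
     /\ all (sideinfo K D k) (nuk ++ num ++ flatten [seq nut t | t <- ts]))
  /\
  (* (iii) *)
  (forall k, K - D - lam K D (ell K D) <= k < K - D ->
     let nuk := (if odd (ell K D) then [::] else [:: k + D])
                  ++ nu_base K D k (uphalf (ell K D)) in
     x k = cw K D x k (+) sumx K x nuk
     /\ all (sideinfo K D k) nuk)
  /\
  (* (iv) *)
  (forall k, K - D <= k < K ->
     let k' := k %% (K - D) in
     let nuk' := [seq j <- iota 0 K | AIR K D j k' && (j != k)] in
     AIR K D k k'
     /\ x k = cw K D x k' (+) sumx K x nuk'
     /\ all (sideinfo K D k) nuk').
Proof.
move=> hD hDK.
have hK : D < K by lia.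
split; first exact: part1.
split; first exact: part2.
split; first exact: part3.
exact: part4.
Qed.
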